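(* Let $0<q<1$ (in the paper $q=1/p$ for a prime $p$). For all integers $k\ge0$ and $s\ge0$, $$T_1(k,s)=\frac{\Pi_k(q^2)}{\Pi_{2k}(q)}\Big(1-q^{s+1}\sum_{j=0}^{k-1}q^{2j}\frac{\Pi_{2j}(q)\,\Pi_{j+s}(q^2)}{\Pi_j(q^2)^2\,\Pi_s(q^2)}\Big)$$ and $$T_3(k,s)=\frac{\Pi_k(q^2)}{\Pi_{2k+1}(q)}\Big(1-q-q^{3s+3}\sum_{j=0}^{k-1}q^{2j}\frac{\Pi_{2j+1}(q)\,\Pi_{j+s}(q^2)}{\Pi_j(q^2)^2\,\Pi_s(q^2)}\Big).$$
   Context: For $n\ge 0$, $\Pi_n(q)=\prod_{j=1}^n(1-q^j)$ (so $\Pi_0=1$). For $\beta\in\{1,3\}$, $k\ge0$, $s\ge0$: $T_\beta(k,s)=1$ if $k=0$, and $T_\beta(k,s)=\sum_{j=0}^{s} q^{\beta j}\,\frac{\Pi_{k+j-1}(q^2)}{\Pi_j(q^2)\,\Pi_{k-1}(q^2)}$ if $k\ge1$. Empty sums are $0$. *)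

(* Defs.v *)
From HB Require Import structures.
From mathcomp Require Import all_boot all_order all_algebra.
Set Implicit Arguments. Unset Strict Implicit. Unset Printing Implicit Defensive.
Import Order.TTheory GRing.Theory Num.Theory.
Local Open Scope ring_scope.

Definition Pi {R : pzRingType} (n : nat) (q : R) : R :=
  \prod_(1 <= j < n.+1) (1 - q ^+ j).

Definition T {R : fieldType} (beta k s : nat) (q : R) : R :=
  if k == 0%N then 1
  else \sum_(0 <= j < s.+1)
         q ^+ (beta * j) * (Pi (k + j).-1 (q ^+ 2) / (Pi j (q ^+ 2) * Pi k.-1 (q ^+ 2))).

(* Main.v *)
Require Import Defs.
From HB Require Import structures.
From mathcomp Require Import all_boot all_order all_algebra.
From mathcomp Require Import ring lra zify.
Import Order.TTheory GRing.Theory Num.Theory.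
Local Open Scope ring_scope.

Lemma PiS {R : pzRingType} n (q : R) : Pi n.+1 q = Pi n q * (1 - q ^+ n.+1).
Proof. by rewrite /Pi big_nat_recr. Qed.

Lemma Pi0 {R : pzRingType} (q : R) : Pi 0 q = 1.
Proof. by rewrite /Pi big_geq. Qed.

Section S.
Variable R : realFieldType.

Lemma sub1X_neq0 (q : R) n : 0 < q -> q < 1 -> 1 - q ^+ n.+1 != 0.
Proof.
move=> h0 h1; rewrite subr_eq0 eq_sym; apply/negP=> /eqP E.
have := exprn_ilt1 n.+1 (ltW h0) h1; rewrite E ltxx => /esym; done.
Qed.

Lemma Pi_gt0 (q : R) n : 0 < q -> q < 1 -> 0 < Pi n q.
Proof.
move=> h0 h1; elim: n => [|n IH]; first by rewrite Pi0.
rewrite PiS mulr_gt0 // subr_gt0 exprn_ilt1 // ltW //.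
Qed.

Lemma Pi_neq0 (q : R) n : 0 < q -> q < 1 -> Pi n q != 0.
Proof. by move=> h0 h1; rewrite gt_eqF // Pi_gt0. Qed.

Definition a (Q : R) k j := Pi (k + j) Q / (Pi j Q * Pi k Q).

Lemma a_0 (Q : R) k : 0 < Q -> Q < 1 -> a Q k 0 = 1.
Proof. by move=> h0 h1; rewrite /a addn0 Pi0 mul1r divff // Pi_neq0. Qed.

Lemma a0j (Q : R) j : 0 < Q -> Q < 1 -> a Q 0 j = 1.
Proof. by move=> h0 h1; rewrite /a add0n Pi0 mulr1 divff // Pi_neq0. Qed.

Lemma aS (Q : R) k j : 0 < Q -> Q < 1 ->
  a Q k.+1 j.+1 = a Q k j.+1 + Q ^+ k.+1 * a Q k.+1 j.
Proof.
move=> h0 h1; rewrite /a addSn addnS !PiS.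
have hk := sub1X_neq0 Q k h0 h1. have hj := sub1X_neq0 Q j h0 h1.
have pk := Pi_neq0 Q k h0 h1. have pj := Pi_neq0 Q j h0 h1.
move: hk hj; rewrite !exprS !exprD.
set A := Q ^+ k; set B := Q ^+ j; set P := Pi (k + j) Q => hk hj.
by field; rewrite ?pk ?pj ?hk ?hj.
Qed.

Lemma geo (x : R) s : (1 - x) * (\sum_(0 <= j < s.+1) x ^+ j) = 1 - x ^+ s.+1.
Proof.
elim: s => [|s IH]; first by rewrite big_nat1 expr0 expr1 mulr1.
rewrite big_nat_recr //= mulrDr IH.
rewrite !exprS; ring.
Qed.

Lemma Urec (Q x : R) k s : 0 < Q -> Q < 1 ->
  (1 - x * Q ^+ k) * (\sum_(0 <= j < s.+1) x ^+ j * a Q k j) =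
  (if k is k'.+1 then \sum_(0 <= j < s.+1) x ^+ j * a Q k' j else 1)
     - x ^+ s.+1 * Q ^+ k * a Q k s.
Proof.
move=> h0 h1; case: k => [|k].
  rewrite expr0 !mulr1 a0j // mulr1 -geo.
  by under eq_bigr do rewrite a0j // mulr1.
elim: s => [|s IH]; first by rewrite !big_nat1 !a_0 // expr0 expr1; ring.
rewrite big_nat_recr //= [in RHS]big_nat_recr //= mulrDr IH (aS Q k s h0 h1).
rewrite !exprS; ring.
Qed.
End S.
Arguments a {R}. Arguments sub1X_neq0 {R}. Arguments Pi_neq0 {R}. Arguments Pi_gt0 {R}. Arguments Urec {R}. Arguments aS {R}.

Section M.
Variable R : realFieldType.
Variables (q : R) (s : nat).
Hypotheses (hq0 : 0 < q) (hq1 : q < 1).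

Lemma T_S beta k : T beta k.+1 s q = \sum_(0 <= j < s.+1) (q ^+ beta) ^+ j * a (q ^+ 2) k j.
Proof. by rewrite /T /=; apply: eq_bigr => j _; rewrite -exprM. Qed.

Lemma Q0 : 0 < q ^+ 2. Proof. exact: exprn_gt0. Qed.
Lemma Q1 : q ^+ 2 < 1. Proof. by rewrite exprn_ilt1 // ltW. Qed.

Lemma Trec beta k :
  (1 - q ^+ beta * (q ^+ 2) ^+ k) * T beta k.+1 s q =
  T beta k s q - (q ^+ beta) ^+ s.+1 * (q ^+ 2) ^+ k * a (q ^+ 2) k s.
Proof.
rewrite T_S Urec ?Q0 ?Q1 //; case: k => [|k]; first by rewrite /T.
by rewrite T_S.
Qed.

Definition R1 k := Pi k (q ^+ 2) / Pi (2 * k) q *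
    (1 - q ^+ s.+1 *
         \sum_(0 <= j < k)
           q ^+ (2 * j) * (Pi (2 * j) q * Pi (j + s) (q ^+ 2) /
                           (Pi j (q ^+ 2) ^+ 2 * Pi s (q ^+ 2)))).

Lemma R1rec k : (1 - q ^+ 1 * (q ^+ 2) ^+ k) * R1 k.+1 =
  R1 k - (q ^+ 1) ^+ s.+1 * (q ^+ 2) ^+ k * a (q ^+ 2) k s.
Proof.
rewrite /R1 big_nat_recr //=.
have -> : (2 * k.+1 = (2 * k).+2)%N by lia.
rewrite !PiS /a [(q ^+ 2) ^+ k.+1]exprS -!exprM expr1.
rewrite [q ^+ (2 * k).+2]exprS [q ^+ (2 * k).+1]exprS.
have hA1 : 1 - q * q ^+ (2 * k) != 0 by rewrite -exprS sub1X_neq0.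
have hA2 : 1 - q * (q * q ^+ (2 * k)) != 0 by rewrite -!exprS sub1X_neq0.
have hA3 : 1 - q ^+ 2 * q ^+ (2 * k) != 0 by rewrite -exprD addnC addn2 sub1X_neq0.
have p1 := Pi_neq0 q (2 * k) hq0 hq1.
have p2 := Pi_neq0 (q ^+ 2) k Q0 Q1.
have p3 := Pi_neq0 (q ^+ 2) s Q0 Q1.
move: hA1 hA2 hA3 p1 p2 p3.
set A := q ^+ (2 * k); set S := \sum_(0 <= j < k) _.
set P1 := Pi (2 * k) q; set P2 := Pi k (q ^+ 2); set P3 := Pi s (q ^+ 2).
move=> hA1 hA2 hA3 p1 p2 p3.
field; rewrite ?hA1 ?hA2 ?hA3 ?p1 ?p2 ?p3 //.
Qed.

Definition R3 k := Pi k (q ^+ 2) / Pi (2 * k).+1 q *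
    (1 - q - q ^+ (3 * s + 3) *
         \sum_(0 <= j < k)
           q ^+ (2 * j) * (Pi (2 * j).+1 q * Pi (j + s) (q ^+ 2) /
                           (Pi j (q ^+ 2) ^+ 2 * Pi s (q ^+ 2)))).

Lemma R3rec k : (1 - q ^+ 3 * (q ^+ 2) ^+ k) * R3 k.+1 =
  R3 k - (q ^+ 3) ^+ s.+1 * (q ^+ 2) ^+ k * a (q ^+ 2) k s.
Proof.
rewrite /R3 big_nat_recr //=.
have -> : (2 * k.+1 = (2 * k).+2)%N by lia.
have -> : (3 * s + 3 = 3 * s.+1)%N by lia.
rewrite !PiS /a [(q ^+ 2) ^+ k.+1]exprS -!exprM.
rewrite [q ^+ (2 * k).+3]exprS [q ^+ (2 * k).+2]exprS [q ^+ (2 * k).+1]exprS.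
have hA1 : 1 - q ^+ 3 * q ^+ (2 * k) != 0 by rewrite -exprD addnC addn3 sub1X_neq0.
have hA2 : 1 - q * (q * (q * q ^+ (2 * k))) != 0 by rewrite -!exprS sub1X_neq0.
have hA4 : 1 - q * (q * q ^+ (2 * k)) != 0 by rewrite -!exprS sub1X_neq0.
have hA3 : 1 - q ^+ 2 * q ^+ (2 * k) != 0 by rewrite -exprD addnC addn2 sub1X_neq0.
have p1 := Pi_neq0 q (2 * k).+1 hq0 hq1.
have p2 := Pi_neq0 (q ^+ 2) k Q0 Q1.
have p3 := Pi_neq0 (q ^+ 2) s Q0 Q1.
move: hA1 hA2 hA3 hA4 p1 p2 p3.
set A := q ^+ (2 * k); set S := \sum_(0 <= j < k) _.
set P1 := Pi (2 * k).+1 q; set P2 := Pi k (q ^+ 2); set P3 := Pi s (q ^+ 2).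
move=> hA1 hA2 hA3 hA4 p1 p2 p3.
field; rewrite ?hA1 ?hA2 ?hA3 ?hA4 ?p1 ?p2 ?p3 //.
by rewrite -exprS sub1X_neq0 // Pi_neq0.
Qed.


Lemma main1 k : T 1 k s q = R1 k.
Proof.
elim: k => [|k IH].
  by rewrite /R1 /T /= big_geq // !Pi0 mulr0 subr0 invr1 !mulr1.
have hm : 1 - q ^+ 1 * (q ^+ 2) ^+ k != 0.
  by rewrite -exprM -exprD add1n; apply: sub1X_neq0.
apply: (mulfI hm); by rewrite Trec R1rec IH.
Qed.

Lemma main3 k : T 3 k s q = R3 k.
Proof.
elim: k => [|k IH].
  rewrite /R3 /T /= big_geq // mulr0 subr0 Pi0 PiS Pi0 mul1r expr1 mul1r mulVf //.
  by rewrite -[q in 1 - q]expr1 sub1X_neq0.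
have hm : 1 - q ^+ 3 * (q ^+ 2) ^+ k != 0.
  by rewrite -exprM -exprD add3n; apply: sub1X_neq0.
apply: (mulfI hm); by rewrite Trec R3rec IH.
Qed.
End M.

Theorem lemma5p1 (R : realFieldType) (q : R) (hq0 : 0 < q) (hq1 : q < 1)
    (k s : nat) :
  T 1 k s q =
    Pi k (q ^+ 2) / Pi (2 * k) q *
    (1 - q ^+ s.+1 *
         \sum_(0 <= j < k)
           q ^+ (2 * j) * (Pi (2 * j) q * Pi (j + s) (q ^+ 2) /
                           (Pi j (q ^+ 2) ^+ 2 * Pi s (q ^+ 2))))
  /\
  T 3 k s q =
    Pi k (q ^+ 2) / Pi (2 * k).+1 q *
    (1 - q - q ^+ (3 * s + 3) *
         \sum_(0 <= j < k)
           q ^+ (2 * j) * (Pi (2 * j).+1 q * Pi (j + s) (q ^+ 2) /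
                           (Pi j (q ^+ 2) ^+ 2 * Pi s (q ^+ 2)))).
Proof. split; [exact: main1 | exact: main3]. Qed.
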